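(* There is a constant $C_{\rm FQ}>0$ such that, as $n\to\infty$, the proportion of integers $m\in[q_n,q_{n+1})$ satisfying $k_{\max}(m)-k_{\min}(m)\ge C_{\rm FQ}\log(n)$ tends to $1$.
   Context: Given an increasing sequence $\{q_i\}$, a decomposition $m=q_{\ell_1}+\dots+q_{\ell_t}$ with $q_{\ell_1}>\dots>q_{\ell_t}$ is FQ-legal if $|\ell_i-\ell_j|\notin\{0,1,3,4\}$ for $i\neq j$ and $\{1,3\}\not\subset\{\ell_1,\dots,\ell_t\}$. The Fibonacci Quilt sequence $\{q_n\}$ has $q_1=1$ and each $q_i$ ($i\ge 2$) is the smallest positive integer with no FQ-legal decomposition using $q_1,\dots,q_{i-1}$ (it begins $1,2,3,4,5,7,9,12,\dots$). For a positive integer $m$, $k_{\min}(m)$ (resp. $k_{\max}(m)$) is the smallest (resp. largest) number of summands in any FQ-legal decomposition of $m$. *)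

(* Defs.v *)
From mathcomp Require Import all_boot.
From Stdlib Require Import Reals.

Set Implicit Arguments.
Unset Strict Implicit.
Unset Printing Implicit Defensive.

Definition ndist (a b : nat) : nat := (a - b) + (b - a).

Definition FQ_legal (L : seq nat) : bool :=
  [&& uniq L, all (fun l => 0 < l) L,
      all (fun a => all (fun b => (a == b) || (ndist a b \notin [:: 1; 3; 4])) L) L
    & ~~ ((1 \in L) && (3 \in L))].

(* For S a set of 0-based positions in 'I_N, the list of (1-based) indices. *)
Definition idx_of (N : nat) (S : {set 'I_N}) : seq nat :=
  [seq (val j).+1 | j <- enum S].

(* [has_decomp s m]: with s = [:: q_1; ...; q_k], m has an FQ-legal
   decomposition using q_1, ..., q_k (position j of s holds q_(j+1)). *)
Definition has_decomp (s : seq nat) (m : nat) : bool :=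
  [exists S : {set 'I_(size s)},
     FQ_legal (idx_of S) && ((\sum_(j in S) nth 0 s j) == m)].

(* Smallest positive integer with no FQ-legal decomposition using s.
   Such an integer exists in [1, sumn s + 1], since sumn s + 1 exceeds
   every subset sum. *)
Definition FQ_next (s : seq nat) : nat :=
  nth 0 [seq m <- iota 1 (sumn s).+1 | ~~ has_decomp s m] 0.

(* [FQ_list n] = [:: q_1; ...; q_n]. For n = 0 -> 1, FQ_next [::] = 1 = q_1. *)
Fixpoint FQ_list (n : nat) : seq nat :=
  match n with
  | 0 => [::]
  | n'.+1 => rcons (FQ_list n') (FQ_next (FQ_list n'))
  end.

(* The Fibonacci Quilt sequence, indexed from 1 (q 0 = 0 is a dummy value). *)
Definition q (n : nat) : nat := last 0 (FQ_list n).

(* Decompositions of m: sets S of positions in 'I_m (position j <-> index j+1,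
   so indices range over 1..m; since q is strictly increasing with q_1 = 1,
   q_l >= l, so any index used in a decomposition of m is <= m). *)
Definition FQ_dec (m : nat) (S : {set 'I_m}) : bool :=
  FQ_legal (idx_of S) && ((\sum_(j in S) q (val j).+1) == m).

(* Largest / smallest number of summands in an FQ-legal decomposition of m.
   (Every positive m has such a decomposition, so the default values of the
   empty max / min, 0 and m, are never used for m >= 1.) *)
Definition kmax (m : nat) : nat := \max_(S : {set 'I_m} | FQ_dec S) #|S|.
Definition kmin (m : nat) : nat := \big[minn/m]_(S : {set 'I_m} | FQ_dec S) #|S|.

(* Main.v *)
Require Import Defs.
From Stdlib Require Import Reals Lra.
From mathcomp Require Import all_boot zify.
Set Implicit Arguments. Unset Strict Implicit. Unset Printing Implicit Defensive.

Fixpoint Q (n : nat) : nat :=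
  match n with
  | S ((S (S (S (S ((S (S p)) as u))))) as m) => Q m + Q u
  | 6 => 7
  | k => k
  end.

Lemma Q_rec n : 6 <= n -> Q n.+1 = Q n + Q (n - 4).
Proof.
by case: n => [|[|[|[|[|[|n]]]]]] //= _; rewrite subn4 /=.
Qed.

Lemma Q_lt n : Q n < Q n.+1.
Proof.
elim/ltn_ind: n => n IH.
case: (leqP 6 n) => h.
  rewrite Q_rec //.
  have := IH (n - 5) ltac:(lia).
  have -> : (n - 5).+1 = n - 4 by lia.
  lia.
by case: n h {IH} => [|[|[|[|[|[|n]]]]]].
Qed.

Lemma Q_mono m n : m <= n -> Q m <= Q n.
Proof.
move=> h; rewrite -(subnKC h); elim: (n - m) => [|k IH]; first by rewrite addn0.
by rewrite addnS; apply: leq_trans IH (ltnW (Q_lt _)).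
Qed.

Lemma Q_smono m n : m < n -> Q m < Q n.
Proof. by move=> h; apply: leq_trans (Q_lt m) (Q_mono h). Qed.

Lemma Q_ltE m n : (Q m < Q n) = (m < n).
Proof.
apply/idP/idP; last exact: Q_smono.
by apply: contraTT; rewrite -!leqNgt => /Q_mono.
Qed.

Lemma Q_ge n : n <= Q n.
Proof.
elim: n => [|n IH] //. by apply: leq_ltn_trans IH (Q_lt n).
Qed.

Lemma QS k : Q k.+4.+3 = Q k.+4.+2 + Q k.+2.
Proof. by []. Qed.

Lemma Q3 k : Q k.+4.+1 = Q k.+3 + Q k.+2.
Proof.
elim/ltn_ind: k => k IH.
case: k IH => [|[|[|[|[|k]]]]] IH //.
have a := IH k.+4 ltac:(lia). have b := IH k ltac:(lia).
have c := QS k.+3. have d := QS k.+1. have e := QS k. have f := QS k.+2. simpl in *. lia.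
Qed.

Lemma Q3n n : 4 <= n -> Q n.+1 = Q n.-1 + Q (n - 2).
Proof.
case: n => [|[|[|[|n]]]] // _.
have -> : n.+4 - 2 = n.+2 by lia.
exact: Q3.
Qed.

Lemma R1 a b c : 6 <= a -> b = a.+1 -> c = a - 4 -> Q b = Q a + Q c.
Proof. by move=> h -> ->; apply: Q_rec. Qed.

Lemma R2 a b c d : 4 <= a -> b = a.+1 -> c = a.-1 -> d = a - 2 -> Q b = Q c + Q d.
Proof. by move=> h -> -> ->; apply: Q3n. Qed.

Lemma I3 n : 9 <= n -> Q n.+1 = Q (n - 1) + Q (n - 3) + Q (n - 7).
Proof.
move=> h.
have := @R2 n n.+1 (n - 1) (n - 2) ltac:(lia) erefl ltac:(lia) erefl.
have := @R1 (n - 3) (n - 2) (n - 7) ltac:(lia) ltac:(lia) ltac:(lia).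
lia.
Qed.

Lemma I4 j : 12 <= j -> Q j + Q (j - 5) = Q (j - 1) + Q (j - 3) + Q (j - 10).
Proof.
move=> h.
have := @R1 (j - 1) j (j - 5) ltac:(lia) ltac:(lia) ltac:(lia).
have := @R2 (j - 4) (j - 3) (j - 5) (j - 6) ltac:(lia) ltac:(lia) ltac:(lia) ltac:(lia).
have := @R1 (j - 6) (j - 5) (j - 10) ltac:(lia) ltac:(lia) ltac:(lia).
lia.
Qed.

Lemma I5 k : Q k + Q (k - 2) + Q (k - 4) < Q (k + 3).
Proof.
case: (leqP 6 k) => h; last first.
  by case: k h => [|[|[|[|[|[|k]]]]]].
have := @R1 (k + 2) (k + 3) (k - 2) ltac:(lia) ltac:(lia) ltac:(lia).
have := @R1 (k + 1) (k + 2) (k - 3) ltac:(lia) ltac:(lia) ltac:(lia).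
have := @R1 k (k + 1) (k - 4) ltac:(lia) ltac:(lia) ltac:(lia).
have := @Q_smono 0 (k - 3) ltac:(lia).
lia.
Qed.

Lemma I6 n : 4 <= n -> Q n.+1 < Q n + Q (n - 2).
Proof.
move=> h; case: (leqP 6 n) => h6; last by case: n h h6 => [|[|[|[|[|[|n]]]]]].
rewrite Q_rec //. have := @Q_smono (n - 4) (n - 2) ltac:(lia). lia.
Qed.

Lemma I7 n : Q n.+1 <= (\sum_(i <- iota 1 n) Q i).+1.
Proof.
elim: n => [|n IH] //.
have -> : iota 1 n.+1 = iota 1 n ++ [:: n.+1] by rewrite -[in LHS](addn1 n) iotaD add1n.
rewrite (_ : \sum_(i <- iota 1 n ++ [:: n.+1]) Q i = \sum_(i <- iota 1 n) Q i + Q n.+1); last by rewrite big_cat big_seq1.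
have : Q n.+2 <= Q n.+1 + Q n.+1.
  case: (leqP 6 n.+1) => h; last by case: n h {IH} => [|[|[|[|[|n]]]]].
  rewrite Q_rec //. have := @Q_mono (n.+1 - 4) n.+1 ltac:(lia). lia.
lia.
Qed.

Definition sumQ (L : seq nat) := \sum_(i <- L) Q i.

Lemma ndistE a b : ndist a b = a - b + (b - a).
Proof. by []. Qed.

Lemma nd_nin a b : ndist a b \notin [:: 1; 3; 4] ->
  [/\ a - b + (b - a) <> 1, a - b + (b - a) <> 3 & a - b + (b - a) <> 4].
Proof. by rewrite ndistE !inE; case/norP => /eqP ? /norP [/eqP ? /eqP ?]. Qed.

Lemma nd_in a b : a - b + (b - a) <> 1 -> a - b + (b - a) <> 3 -> a - b + (b - a) <> 4 ->
  ndist a b \notin [:: 1; 3; 4].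
Proof. by move=> h1 h3 h4; rewrite ndistE !inE; apply/negP => /or3P [] /eqP. Qed.

Lemma legal_sub L L' : FQ_legal L -> uniq L' -> {subset L' <= L} -> FQ_legal L'.
Proof.
case/and4P => _ hpos hpair h13 hu hs; apply/and4P; split => //.
- by apply/allP => x /hs /(allP hpos).
- apply/allP => x /hs hx; apply/allP => y /hs hy.
  by have /allP := allP hpair x hx; apply.
- apply: contra h13 => /andP [/hs -> /hs ->]. by [].
Qed.

Lemma legal_perm L1 L2 : perm_eq L1 L2 -> FQ_legal L1 = FQ_legal L2.
Proof.
move=> p; apply/idP/idP => h.
  by apply: (legal_sub h); [rewrite -(perm_uniq p); case/and4P: h | move=> x; rewrite (perm_mem p)].
by apply: (legal_sub h); [rewrite (perm_uniq p); case/and4P: h | move=> x; rewrite (perm_mem p)].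
Qed.

Lemma legal_pos L a : FQ_legal L -> a \in L -> 0 < a.
Proof. by case/and4P => _ /allP h _ _ /h. Qed.

Lemma legal_pair L a b : FQ_legal L -> a \in L -> b \in L -> a != b ->
  ndist a b \notin [:: 1; 3; 4].
Proof.
case/and4P => _ _ /allP h _ ha hb; have /allP := h a ha => /(_ b hb).
by case: eqP.
Qed.

Lemma legal_uniq L : FQ_legal L -> uniq L.
Proof. by case/and4P. Qed.

Lemma legal_13 L : FQ_legal L -> 1 \in L -> 3 \in L -> False.
Proof. by case/and4P => _ _ _ /negP h h1 h3; apply: h; rewrite h1 h3. Qed.

Lemma ndistC a b : ndist a b = ndist b a.
Proof. by rewrite !ndistE addnC. Qed.

Lemma legal_cons L a : FQ_legal L -> 0 < a -> a != 1 -> a != 3 ->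
  (forall b, b \in L -> b != a) -> (forall b, b \in L -> ndist a b \notin [:: 1; 3; 4]) ->
  FQ_legal (a :: L).
Proof.
case/and4P => hu hpos /allP hpair h13 ha0 ha1 ha3 hne hnd.
apply/and4P; split.
- rewrite /= hu andbT; apply/negP => /hne; by rewrite eqxx.
- by rewrite /= ha0 hpos.
- apply/allP => x; rewrite inE => /orP [/eqP -> | hx]; apply/allP => y; rewrite inE => /orP [/eqP -> | hy].
  + by rewrite eqxx.
  + by rewrite hnd ?orbT.
  + by rewrite ndistC hnd ?orbT.
  + by have /allP := hpair x hx; apply.
- by rewrite !inE (eq_sym 1) (eq_sym 3) (negbTE ha1) (negbTE ha3).
Qed.

Lemma sumQ_cons a L : sumQ (a :: L) = Q a + sumQ L.
Proof. by rewrite /sumQ big_cons. Qed.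

Lemma sumQ_perm L1 L2 : perm_eq L1 L2 -> sumQ L1 = sumQ L2.
Proof. by move=> p; rewrite /sumQ (perm_big _ p). Qed.

Lemma legal_split L a : FQ_legal L -> a \in L ->
  [/\ FQ_legal (rem a L), sumQ L = Q a + sumQ (rem a L) &
      forall b, b \in rem a L -> (b \in L) && (b != a)].
Proof.
move=> hL ha; have hu := legal_uniq hL.
have hmem b : b \in rem a L -> (b \in L) && (b != a).
  by rewrite (mem_rem_uniq _ hu) inE andbC.
split => //.
- apply: (legal_sub hL (rem_uniq _ hu)) => b /hmem /andP [] //.
- by rewrite -sumQ_cons; apply: sumQ_perm; apply: perm_to_rem.
Qed.

Lemma sumQ_mem L a : a \in L -> Q a <= sumQ L.
Proof.
elim: L => [|x L IH] //; rewrite inE sumQ_cons => /orP [/eqP -> | /IH]; lia.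
Qed.

Lemma legal_le0 L : FQ_legal L -> {in L, forall i, i <= 0} -> L = [::].
Proof.
case: L => [|x L] // hL h. have := legal_pos hL (mem_head x L). have := h x (mem_head x L). lia.
Qed.

Lemma pairF L a b : FQ_legal L -> a \in L -> b \in L -> a != b ->
  [/\ a - b + (b - a) <> 1, a - b + (b - a) <> 3 & a - b + (b - a) <> 4].
Proof. by move=> *; apply: nd_nin; apply: (legal_pair (L:=L)). Qed.

Lemma Bd k L : FQ_legal L -> {in L, forall i, i <= k} -> sumQ L < Q (k + 3).
Proof.
elim/ltn_ind: k L => k IH L hL hk.
case hkL: (k \in L).
- have [hL' hs hm] := legal_split hL hkL.
  have hk0 : 0 < k by apply: (legal_pos hL hkL).
  case h2: (k - 2 \in rem k L).
  + have [hL'' hs' hm'] := legal_split hL' h2.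
    have h2L : k - 2 \in L by case/andP: (hm _ h2).
    have hb : {in rem (k - 2) (rem k L), forall i, i <= k - 7}.
      move=> b /hm' /andP [/hm /andP [hbL hbk] hb2].
      have := hk _ hbL. have := legal_pos hL hbL. have := legal_pos hL h2L.
      have [? ? ?] := pairF hL hkL hbL ltac:(by rewrite eq_sym).
      have [? ? ?] := pairF hL h2L hbL ltac:(by rewrite eq_sym).
      move: hbk hb2 => /eqP ? /eqP ?. lia.
    have hs'' : sumQ (rem (k - 2) (rem k L)) <= Q (k - 4).
      case: (leqP 7 k) => h7.
        have := IH (k - 7) ltac:(lia) _ hL'' hb. have -> : k - 7 + 3 = k - 4 by lia. lia.
      rewrite (legal_le0 hL''); first by rewrite /sumQ big_nil.
      move=> i /hb; lia.
    have := I5 k. lia.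
  + have hb : {in rem k L, forall i, i <= k - 5}.
      move=> b hbm; have /andP [hbL hbk] := hm _ hbm.
      have hb2 : b != k - 2 by apply: contraFneq h2 => <-.
      have := hk _ hbL. have := legal_pos hL hbL.
      have [? ? ?] := pairF hL hkL hbL ltac:(by rewrite eq_sym).
      move: hbk hb2 => /eqP ? /eqP ?. lia.
    have hs'' : sumQ (rem k L) <= Q (k - 2).
      case: (leqP 5 k) => h5.
        have := IH (k - 5) ltac:(lia) _ hL' hb. have -> : k - 5 + 3 = k - 2 by lia. lia.
      rewrite (legal_le0 hL'); first by rewrite /sumQ big_nil.
      move=> i /hb; lia.
    have := I5 k. lia.
- case: k IH hk hkL => [|k] IH hk hkL.
    by rewrite (legal_le0 hL hk) /sumQ big_nil.
  have hb : {in L, forall i, i <= k}.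
    move=> b hbL; have := hk _ hbL; have : b != k.+1 by apply: contraFneq hkL => <-.
    move/eqP; lia.
  have := IH k (ltnSn k) _ hL hb.
  have := @Q_lt (k + 3). have -> : k.+1 + 3 = (k + 3).+1 by lia. lia.
Qed.

Lemma sumQ_nil : sumQ [::] = 0.
Proof. by rewrite /sumQ big_nil. Qed.

Lemma Q_pos n : 0 < Q n.+1.
Proof. by apply: leq_trans (Q_ge n.+1). Qed.

Lemma NonEx n L : FQ_legal L -> {in L, forall i, i <= n} -> sumQ L <> Q n.+1.
Proof.
elim/ltn_ind: n L => n IH L hL hn.
case hnL: (n \in L).
- have [hL' hs hm] := legal_split hL hnL.
  have hn0 : 0 < n by apply: (legal_pos hL hnL).
  case h2: (n - 2 \in rem n L).
  + have h2L : n - 2 \in L by case/andP: (hm _ h2).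
    have := legal_pos hL h2L => h2p.
    have := sumQ_mem h2.
    case: (leqP 4 n) => h4.
      have := I6 h4. lia.
    have e : n = 3 by lia.
    exfalso; apply: (legal_13 hL); [by move: h2L; rewrite e | by move: hnL; rewrite e].
  + have hb : {in rem n L, forall i, i <= n - 5}.
      move=> b hbm; have /andP [hbL hbk] := hm _ hbm.
      have hb2 : b != n - 2 by apply: contraFneq h2 => <-.
      have := hn _ hbL. have := legal_pos hL hbL.
      have [? ? ?] := pairF hL hnL hbL ltac:(by rewrite eq_sym).
      move: hbk hb2 => /eqP ? /eqP ?. lia.
    case: (leqP 6 n) => h6.
      have := IH (n - 5) ltac:(lia) _ hL' hb.
      have -> : (n - 5).+1 = n - 4 by lia. rewrite (Q_rec h6). lia.
    rewrite hs (legal_le0 hL'); last by move=> i /hb; lia.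
    rewrite sumQ_nil addn0. have := Q_lt n. lia.
- have hn1 : {in L, forall i, i <= n - 1}.
    move=> b hbL; have := hn _ hbL; have : b != n by apply: contraFneq hnL => <-.
    move/eqP; lia.
  case h1: (n - 1 \in L).
  + have [hL' hs hm] := legal_split hL h1.
    have hp1 := legal_pos hL h1.
    case h3: (n - 3 \in rem (n - 1) L).
    * have [hL'' hs' hm'] := legal_split hL' h3.
      have h3L : n - 3 \in L by case/andP: (hm _ h3).
      have hp3 := legal_pos hL h3L.
      have hb : {in rem (n - 3) (rem (n - 1) L), forall i, i <= n - 8}.
        move=> b /hm' /andP [/hm /andP [hbL hbk] hb2].
        have := hn1 _ hbL. have := legal_pos hL hbL.
        have [? ? ?] := pairF hL h1 hbL ltac:(by rewrite eq_sym).
        have [? ? ?] := pairF hL h3L hbL ltac:(by rewrite eq_sym).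
        move: hbk hb2 => /eqP ? /eqP ?. lia.
      case: (leqP 9 n) => h9.
        have := IH (n - 8) ltac:(lia) _ hL'' hb.
        have -> : (n - 8).+1 = n - 7 by lia. rewrite (I3 h9). lia.
      rewrite hs hs' (legal_le0 hL''); last by move=> i /hb; lia.
      rewrite sumQ_nil addn0.
      by case: n {IH hn hnL hn1 h1 hs hm hp1 h3 hs' hm' h3L hp3 hb} h9 hL' hL'' => [|[|[|[|[|[|[|[|[|n]]]]]]]]].
    * have hb : {in rem (n - 1) L, forall i, i <= n - 6}.
        move=> b hbm; have /andP [hbL hbk] := hm _ hbm.
        have hb2 : b != n - 3 by apply: contraFneq h3 => <-.
        have := hn1 _ hbL. have := legal_pos hL hbL.
        have [? ? ?] := pairF hL h1 hbL ltac:(by rewrite eq_sym).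
        move: hbk hb2 => /eqP ? /eqP ?. lia.
      case: (leqP 6 n) => h6.
        have := Bd hL' hb. have -> : n - 6 + 3 = n - 3 by lia.
        rewrite hs Q3n; last lia.
        have := @Q_mono (n - 3) (n - 2) ltac:(lia).
        have -> : n.-1 = n - 1 by lia. lia.
      rewrite hs (legal_le0 hL'); last by move=> i /hb; lia.
      rewrite sumQ_nil addn0. have := @Q_smono (n - 1) n.+1 ltac:(lia). lia.
  + have hb : {in L, forall i, i <= n - 2}.
      move=> b hbL; have := hn1 _ hbL; have : b != n - 1 by apply: contraFneq h1 => <-.
      move/eqP; have := legal_pos hL hbL. lia.
    case: (leqP 2 n) => h2.
      have := Bd hL hb. have -> : n - 2 + 3 = n.+1 by lia. lia.
    rewrite (legal_le0 hL); last by move=> i /hb; lia.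
    rewrite sumQ_nil. have := Q_pos n. lia.
Qed.

Lemma Ex n m : m < Q n.+1 ->
  exists L, [/\ FQ_legal L, {in L, forall i, i <= n} & sumQ L = m].
Proof.
elim/ltn_ind: n m => n IH m hm.
case: (leqP 6 n) => h6; last first.
  { clear IH.
  case: n hm h6 => [|[|[|[|[|[|n]]]]]] hm h6 //.
  all: case: m hm => [|[|[|[|[|[|[|m]]]]]]] hm //.
  all: solve [ exists [::]; split; [by [] | by [] | by rewrite /sumQ big_nil]
             | exists [:: 1]; split; [by [] | by move=> i; rewrite !inE => /eqP -> | by rewrite /sumQ !big_cons big_nil]
             | exists [:: 2]; split; [by [] | by move=> i; rewrite !inE => /eqP -> | by rewrite /sumQ !big_cons big_nil]
             | exists [:: 3]; split; [by [] | by move=> i; rewrite !inE => /eqP -> | by rewrite /sumQ !big_cons big_nil]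
             | exists [:: 4]; split; [by [] | by move=> i; rewrite !inE => /eqP -> | by rewrite /sumQ !big_cons big_nil]
             | exists [:: 5]; split; [by [] | by move=> i; rewrite !inE => /eqP -> | by rewrite /sumQ !big_cons big_nil]
             | exists [:: 4; 2]; split; [by [] | by move=> i; rewrite !inE => /orP [] /eqP -> | by rewrite /sumQ !big_cons big_nil] ]. }
case: (ltnP m (Q n)) => h.
  have [L [hL hb hs]] := IH n.-1 ltac:(lia) m ltac:(by rewrite prednK; lia).
  by exists L; split => // i /hb; lia.
have hr : m - Q n < Q (n - 4) by move: hm; rewrite (Q_rec h6); lia.
have [L [hL hb hs]] := IH (n - 5) ltac:(lia) (m - Q n) ltac:(by have -> : (n - 5).+1 = n - 4 by lia).
exists (n :: L); split.
- apply: legal_cons => //; try (apply/eqP; lia).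
  + by move=> b /hb hb'; apply/eqP; lia.
  + move=> b /hb hb'; apply: nd_in; lia.
- move=> i; rewrite inE => /orP [/eqP -> // | /hb]; lia.
- rewrite sumQ_cons hs; lia.
Qed.

Lemma G1 N (S : {set 'I_N}) (F : nat -> nat) :
  \sum_(j in S) F (val j).+1 = \sum_(i <- idx_of S) F i.
Proof. by rewrite /idx_of big_map big_enum. Qed.

Lemma idx_bound N (S : {set 'I_N}) i : i \in idx_of S -> 0 < i <= N.
Proof. by case/mapP => j _ ->; rewrite ltn_ord. Qed.

Lemma idx_uniq N (S : {set 'I_N}) : uniq (idx_of S).
Proof.
rewrite /idx_of map_inj_uniq ?enum_uniq // => a b /eqP; rewrite eqSS => /eqP; exact: val_inj.
Qed.

Lemma idx_size N (S : {set 'I_N}) : size (idx_of S) = #|S|.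
Proof. by rewrite /idx_of size_map cardE. Qed.

Definition setL N (L : seq nat) : {set 'I_N} := [set j : 'I_N | (val j).+1 \in L].

Lemma G2 N L : uniq L -> {in L, forall i, 0 < i <= N} -> perm_eq (idx_of (setL N L)) L.
Proof.
move=> hu hb; apply: uniq_perm => //; first exact: idx_uniq.
move=> i; apply/idP/idP.
  by case/mapP => j; rewrite mem_enum inE => hj ->.
move=> hi; have /andP [h0 hN] := hb i hi.
apply/mapP; exists (Ordinal (n := N) (m := i.-1) ltac:(lia)); last by rewrite /= prednK.
by rewrite mem_enum inE /= prednK.
Qed.

Lemma has_decompP s m :
  has_decomp s m <-> exists L, [/\ FQ_legal L, {in L, forall i, i <= size s} &
                              \sum_(i <- L) nth 0 s i.-1 = m].
Proof.
split.
  case/existsP => S /andP [hl /eqP hs]; exists (idx_of S); split => //.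
    by move=> i /idx_bound /andP [].
  by rewrite -hs (G1 S (fun i => nth 0 s i.-1)).
case=> L [hl hb hs]; apply/existsP; exists (setL (size s) L).
have p : perm_eq (idx_of (setL (size s) L)) L.
  apply: G2; first exact: legal_uniq.
  by move=> i hi; rewrite (legal_pos hl hi) hb.
apply/andP; split; first by rewrite (legal_perm p).
by rewrite (G1 _ (fun i => nth 0 s i.-1)) (perm_big _ p) hs.
Qed.

Lemma FQ_next_char s x : 0 < x <= (sumn s).+1 -> ~~ has_decomp s x ->
  (forall m, 0 < m < x -> has_decomp s m) -> FQ_next s = x.
Proof.
move=> /andP [hx0 hxN] hnx hall; rewrite /FQ_next.
have e : (sumn s).+1 = x.-1 + ((sumn s).+2 - x) by lia.
rewrite e iotaD filter_cat.
have -> : [seq m <- iota 1 x.-1 | ~~ has_decomp s m] = [::].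
  rewrite (@eq_in_filter _ _ pred0) ?filter_pred0 // => y; rewrite mem_iota => hy.
  by rewrite hall //; lia.
have -> : 1 + x.-1 = x by lia.
have -> : (sumn s).+2 - x = ((sumn s).+2 - x).-1.+1 by lia.
by rewrite /= hnx.
Qed.

Lemma nth_QS n i : 0 < i <= n -> nth 0 (map Q (iota 1 n)) i.-1 = Q i.
Proof.
move=> /andP [h0 hn].
have h : i.-1 < size (iota 1 n) by rewrite size_iota; lia.
have := nth_map 0 0 Q h. rewrite nth_iota; last by lia.
have -> : 1 + i.-1 = i by lia. by [].
Qed.

Lemma has_decompQ n m :
  has_decomp (map Q (iota 1 n)) m <->
  exists L, [/\ FQ_legal L, {in L, forall i, i <= n} & sumQ L = m].
Proof.
rewrite has_decompP size_map size_iota.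
split; case=> L [hl hb hs]; exists L; split => //; rewrite -hs /sumQ;
  rewrite [in RHS]big_seq [in LHS]big_seq; apply: eq_bigr => i hi;
  by rewrite nth_QS // (legal_pos hl hi) hb.
Qed.

Lemma FQ_next_Q n : FQ_next (map Q (iota 1 n)) = Q n.+1.
Proof.
apply: FQ_next_char.
- rewrite Q_pos /=. have := I7 n. rewrite sumnE big_map. by [].
- apply/negP => /has_decompQ [L [hl hb hs]]. exact: (NonEx hl hb hs).
- move=> m /andP [_ hm]. apply/has_decompQ. exact: Ex.
Qed.

Lemma FQ_list_Q n : FQ_list n = map Q (iota 1 n).
Proof.
elim: n => [|n IH] //.
have -> : FQ_list n.+1 = rcons (FQ_list n) (FQ_next (FQ_list n)) by [].
rewrite IH FQ_next_Q.
have -> : iota 1 n.+1 = rcons (iota 1 n) n.+1.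
  by rewrite -cats1 -[in LHS](addn1 n) iotaD add1n.
by rewrite map_rcons.
Qed.

Lemma qQ n : q n = Q n.
Proof.
rewrite /q FQ_list_Q; case: n => [|n] //.
have -> : iota 1 n.+1 = rcons (iota 1 n) n.+1.
  by rewrite -cats1 -[in LHS](addn1 n) iotaD add1n.
by rewrite map_rcons last_rcons.
Qed.

Definition dec m L := FQ_legal L /\ sumQ L = m.

Lemma dec_elem m L : dec m L -> {in L, forall i, 0 < i <= m}.
Proof.
case=> hl hs i hi; rewrite (legal_pos hl hi) /= -hs.
exact: leq_trans (Q_ge i) (sumQ_mem hi).
Qed.

Lemma set_dec m (S : {set 'I_m}) : FQ_dec S -> dec m (idx_of S) /\ size (idx_of S) = #|S|.
Proof.
case/andP => hl /eqP hs; split; last exact: idx_size.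
split => //; rewrite /sumQ -(G1 S Q); apply: etrans _ hs; apply: eq_bigr => i _; by rewrite qQ.
Qed.

Lemma dec_set m L : dec m L -> FQ_dec (setL m L) /\ #|setL m L| = size L.
Proof.
move=> d; have [hl hs] := d.
have p : perm_eq (idx_of (setL m L)) L by apply: G2; [exact: legal_uniq | exact: dec_elem].
split; last by rewrite -idx_size (perm_size p).
apply/andP; split; first by rewrite (legal_perm p).
apply/eqP; rewrite (G1 _ q) (perm_big _ p); apply: etrans _ hs; apply: eq_bigr => i _; by rewrite qQ.
Qed.

Lemma kmax_ge m L : dec m L -> size L <= kmax m.
Proof. by case/dec_set => h <-; apply: (leq_bigmax_cond (setL m L)). Qed.

Lemma bigmin_le (I : eqType) (r : seq I) (P : pred I) (F : I -> nat) x j :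
  j \in r -> P j -> \big[minn/x]_(i <- r | P i) F i <= F j.
Proof.
elim: r => [|a r IH] //; rewrite inE big_cons => /orP [/eqP <- -> | hj hP].
  exact: geq_minl.
case: (P a); last exact: IH.
exact: leq_trans (geq_minr _ _) (IH hj hP).
Qed.

Lemma kmin_le m L : dec m L -> kmin m <= size L.
Proof.
case/dec_set => h <-; rewrite /kmin; apply: bigmin_le => //; exact: mem_index_enum.
Qed.

Lemma kmax_arg m L : dec m L -> exists L', dec m L' /\ size L' = kmax m.
Proof.
case/dec_set => h _; rewrite /kmax (bigmax_eq_arg (setL m L)) //.
case: arg_maxnP => //= S hS _; have [d e] := set_dec hS; by exists (idx_of S).
Qed.

Lemma kmin_arg m L : dec m L -> exists L', dec m L' /\ size L' = kmin m.
Proof.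
move=> d; have [h hc] := dec_set d.
have : kmin m = m \/ exists S : {set 'I_m}, FQ_dec S /\ #|S| = kmin m.
  rewrite /kmin; elim/big_ind: _ => [| x y hx hy | S hS]; [by left | | by right; exists S].
  rewrite /minn; case: ifP => _ //.
case=> [e | [S [hS e]]].
  exists L; split => //; apply/eqP; rewrite eqn_leq (kmin_le d) andbT e -hc.
  by have := max_card (setL m L); rewrite card_ord.
have [d' e'] := set_dec hS; exists (idx_of S); split => //; by rewrite e'.
Qed.

Lemma kmin_kmax m L : dec m L -> kmin m <= kmax m.
Proof. move=> d; exact: leq_trans (kmin_le d) (kmax_ge d). Qed.

Lemma dec_ex m : exists L, dec m L.
Proof.
have [L [hl _ hs]] := @Ex m m (leq_trans (Q_ge m.+1) (leqnn _)). by exists L.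
Qed.

Definition h m := kmax m - kmin m.

Lemma dec_lt r L t : dec r L -> r < Q t -> {in L, forall i, i < t}.
Proof.
case=> hl hs hr i hi; rewrite -Q_ltE; apply: leq_ltn_trans hr; rewrite -hs; exact: sumQ_mem.
Qed.

Lemma cons_far L a : FQ_legal L -> {in L, forall i, i + 5 <= a} -> 5 <= a -> FQ_legal (a :: L).
Proof.
move=> hl hb ha; apply: legal_cons => //; try (apply/eqP; lia).
- by move=> b /hb hb'; apply/eqP; lia.
- move=> b /hb hb'; apply: nd_in; lia.
Qed.

Lemma hstep n r : 6 <= n -> r < Q (n - 4) -> h r <= h (Q n + r).
Proof.
move=> hn hr.
have [L0 d0] := dec_ex r.
have [L1 [d1 e1]] := kmax_arg d0.
have [L2 [d2 e2]] := kmin_arg d0.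
have mk : forall L, dec r L -> dec (Q n + r) (n :: L).
  move=> L d; have hb := dec_lt d hr; case: d => hl hs; split.
    apply: cons_far; [exact: hl | move=> i /hb; lia | lia].
  by rewrite sumQ_cons hs.
have := kmax_ge (mk _ d1). have := kmin_le (mk _ d2). rewrite /h /= e1 e2. lia.
Qed.

Lemma hpat j r : 16 <= j -> r < Q (j - 14) -> (h r).+1 <= h (Q j + Q (j - 5) + r).
Proof.
move=> hj hr.
have [L0 d0] := dec_ex r.
have [L1 [d1 e1]] := kmax_arg d0.
have [L2 [d2 e2]] := kmin_arg d0.
have kk := kmin_kmax d0.
have dA : dec (Q j + Q (j - 5) + r) [:: j, j - 5 & L2].
  have hb := dec_lt d2 hr; case: d2 => hl hs; split.
    apply: cons_far; last lia.
      apply: cons_far; [exact: hl | move=> i /hb; lia | lia].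
    move=> i; rewrite inE => /orP [/eqP -> | /hb]; lia.
  by rewrite !sumQ_cons hs; lia.
have dB : dec (Q j + Q (j - 5) + r) [:: j - 1, j - 3, j - 10 & L1].
  have hb := dec_lt d1 hr; case: d1 => hl hs; split.
    have h3 : FQ_legal [:: j - 3, j - 10 & L1].
      apply: cons_far; last lia.
        apply: cons_far; [exact: hl | move=> i /hb; lia | lia].
      move=> i; rewrite inE => /orP [/eqP -> | /hb]; lia.
    apply: legal_cons => //; try (apply/eqP; lia).
    + move=> b; rewrite !inE => /orP [/eqP -> | /orP [/eqP -> | /hb]]; move=> *; apply/eqP; lia.
    + move=> b hb'; apply: nd_in; move: hb'; rewrite !inE => /orP [/eqP -> | /orP [/eqP -> | /hb]]; lia.
  rewrite !sumQ_cons hs. have := @I4 j ltac:(lia). lia.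
have := kmax_ge dB. have := kmin_le dA. rewrite /h /= e1 e2. lia.
Qed.

Local Open Scope R_scope.

Fixpoint sr (f : nat -> R) (a n : nat) : R :=
  match n with 0 => 0 | S n => f a + sr f (S a) n end.

Lemma sr_ext f g a n : (forall i, f i = g i) -> sr f a n = sr g a n.
Proof. move=> e; elim: n a => [|n IH] a //=; by rewrite e IH. Qed.

Lemma sr_split f a n1 n2 : sr f a (n1 + n2) = sr f a n1 + sr f (a + n1) n2.
Proof.
elim: n1 a => [|n1 IH] a /=; first by rewrite add0n addn0; lra.
rewrite IH addSnnS; lra.
Qed.

Lemma sr_le f g a n : (forall i, (a <= i < a + n)%N -> f i <= g i) -> sr f a n <= sr g a n.
Proof.
elim: n a => [|n IH] a h /=; first lra.
have := h a ltac:(lia). have := IH a.+1 ltac:(move=> i hi; apply: h; lia). lra.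
Qed.

Lemma sr_shift f a n : sr f a n = sr (fun r => f (a + r)%N) 0 n.
Proof.
elim: n f a => [|n IH] f a //=; rewrite addn0 IH (IH _ 1%N); congr (_ + _).
by apply: sr_ext => r; rewrite add1n addSnnS.
Qed.

Lemma sr_shift_le f g a n : (forall r, (r < n)%N -> f (a + r)%N <= g r) -> sr f a n <= sr g 0 n.
Proof. move=> h; rewrite sr_shift; apply: sr_le => i hi; apply: h; lia. Qed.

Lemma sr_ge0 f a n : (forall i, 0 <= f i) -> 0 <= sr f a n.
Proof. move=> h; elim: n a => [|n IH] a /=; first lra. have := h a. have := IH a.+1. lra. Qed.

Lemma sr_scal c f a n : sr (fun i => c * f i) a n = c * sr f a n.
Proof. elim: n a => [|n IH] a /=; first lra. rewrite IH; lra. Qed.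

Lemma sr_le1 f a n : (forall i, f i <= 1) -> sr f a n <= INR n.
Proof.
move=> h; elim: n a => [|n IH] a; first by simpl; lra. rewrite S_INR /=. have := h a. have := IH a.+1. lra.
Qed.

Lemma sr_count (P : pred nat) g a n : (forall i, 0 <= g i) -> (forall i, P i -> 1 <= g i) ->
  INR (count P (iota a n)) <= sr g a n.
Proof.
move=> h0 h1; elim: n a => [|n IH] a; first by simpl; lra.
rewrite /= plus_INR. have := IH a.+1. case: (boolP (P a)) => hp /=.
  have := h1 a hp. lra.
have := h0 a. lra.
Qed.

Definition w (m : nat) : R := (/ 2) ^ (h m).

Lemma w_ge0 m : 0 <= w m.
Proof. rewrite /w; apply: pow_le; lra. Qed.

Lemma half_pow_le1 c : (/ 2) ^ c <= 1.
Proof. elim: c => [|c IH] /=; first lra. have := pow_le (/2) c ltac:(lra). nra. Qed.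

Lemma half_pow_anti a b : (b <= a)%N -> (/ 2) ^ a <= (/ 2) ^ b.
Proof.
move=> hab; rewrite -(subnKC hab) pow_add.
have := half_pow_le1 (a - b). have := pow_le (/2) b ltac:(lra). nra.
Qed.

Lemma w_le1 m : w m <= 1.
Proof. exact: half_pow_le1. Qed.

Lemma w_mono r m : (h r <= h m)%N -> w m <= w r.
Proof. exact: half_pow_anti. Qed.

Lemma w_pat r m : ((h r).+1 <= h m)%N -> w m <= / 2 * w r.
Proof.
move=> hh; rewrite /w. have -> : / 2 * (/ 2) ^ h r = (/ 2) ^ (h r).+1 by [].
exact: half_pow_anti.
Qed.

Lemma sr_shift_le2 f g a b n : (forall r, (r < n)%N -> f (a + r)%N <= g (b + r)%N) ->
  sr f a n <= sr g b n.
Proof. move=> hh; rewrite sr_shift (sr_shift g); apply: sr_le => i hi; apply: hh; lia. Qed.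

Definition E k := sr w 0 (Q k).
Definition D i := sr w (Q i) (Q i.+1 - Q i).

Lemma E_succ i : E i.+1 = E i + D i.
Proof.
rewrite /E /D. have e : Q i.+1 = (Q i + (Q i.+1 - Q i))%N by have := Q_lt i; lia.
by rewrite {1}e sr_split add0n.
Qed.

Lemma D_le i e : (6 <= i)%N -> e = (i - 4)%N -> D i <= E e.
Proof.
move=> hi ->; rewrite /D /E (Q_rec hi).
have -> : (Q i + Q (i - 4) - Q i = Q (i - 4))%N by lia.
apply: sr_shift_le => r hr; apply: w_mono; exact: hstep.
Qed.

Lemma D_pat j : (20 <= j)%N -> D j <= E (j - 5) + / 2 * E (j - 14) + (E (j - 9) - E (j - 14)).
Proof.
move=> hj; rewrite /D.
have e1 : (Q j.+1 - Q j = Q (j - 5) + (Q (j - 14) + (Q (j - 9) - Q (j - 14))))%N.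
  rewrite (@Q_rec j) ?(@R1 (j - 5) (j - 4) (j - 9)); try lia.
  have := @Q_mono (j - 14) (j - 9) ltac:(lia). lia.
rewrite e1 !sr_split.
have -> : E (j - 9) - E (j - 14) = sr w (Q (j - 14)) (Q (j - 9) - Q (j - 14)).
  rewrite /E. have e2 : Q (j - 9) = (Q (j - 14) + (Q (j - 9) - Q (j - 14)))%N.
    have := @Q_mono (j - 14) (j - 9) ltac:(lia). lia.
  rewrite {1}e2 sr_split add0n; lra.
have a1 : sr w (Q j) (Q (j - 5)) <= E (j - 5).
  apply: sr_shift_le => r hr; apply: w_mono; apply: hstep; first lia.
  have := @Q_mono (j - 5) (j - 4) ltac:(lia). lia.
have a2 : sr w (Q j + Q (j - 5)) (Q (j - 14)) <= / 2 * E (j - 14).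
  rewrite /E -sr_scal; apply: sr_shift_le => r hr; apply: w_pat; apply: hpat => //; lia.
have a3 : sr w (Q j + Q (j - 5) + Q (j - 14)) (Q (j - 9) - Q (j - 14))
          <= sr w (Q (j - 14)) (Q (j - 9) - Q (j - 14)).
  apply: sr_shift_le2 => r hr; apply: w_mono.
  have := @Q_mono (j - 14) (j - 9) ltac:(lia) => hm.
  apply: (@leq_trans (h (Q (j - 5) + (Q (j - 14) + r)))).
    apply: hstep; first lia. have -> : (j - 5 - 4 = j - 9)%N by lia. lia.
  have -> : (Q j + Q (j - 5) + Q (j - 14) + r = Q j + (Q (j - 5) + (Q (j - 14) + r)))%N by lia.
  apply: hstep; first lia.
  rewrite (@R1 (j - 5) (j - 4) (j - 9)); try lia.
lra.
Qed.

Lemma E_succ' a b : b = a.+1 -> E b = E a + D a.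
Proof. move=> ->; exact: E_succ. Qed.

Lemma E_rec p : E (p + 25) <= E (p + 24) + E (p + 19) + 3 / 2 * E (p + 10)
   + E (p + 9) + E (p + 8) + E (p + 7) + E (p + 6).
Proof.
have e0 := @E_succ' (p + 24) (p + 25) ltac:(lia).
have := @D_pat (p + 24) ltac:(lia).
have -> : (p + 24 - 5 = p + 19)%N by lia.
have -> : (p + 24 - 14 = p + 10)%N by lia.
have -> : (p + 24 - 9 = p + 15)%N by lia.
move=> d0.
have e1 := @E_succ' (p + 14) (p + 15) ltac:(lia).
have e2 := @E_succ' (p + 13) (p + 14) ltac:(lia).
have e3 := @E_succ' (p + 12) (p + 13) ltac:(lia).
have e4 := @E_succ' (p + 11) (p + 12) ltac:(lia).
have e5 := @E_succ' (p + 10) (p + 11) ltac:(lia).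
have f1 := @D_le (p + 14) (p + 10) ltac:(lia) ltac:(lia).
have f2 := @D_le (p + 13) (p + 9) ltac:(lia) ltac:(lia).
have f3 := @D_le (p + 12) (p + 8) ltac:(lia) ltac:(lia).
have f4 := @D_le (p + 11) (p + 7) ltac:(lia) ltac:(lia).
have f5 := @D_le (p + 10) (p + 6) ltac:(lia) ltac:(lia).
lra.
Qed.



Definition th := 661 / 500.
Definition th' := 331 / 250.

Lemma th_num : th ^ 18 + th ^ 13 + 3 / 2 * th ^ 4 + th ^ 3 + th ^ 2 + th + 1 <= th ^ 19.
Proof. rewrite /th /=. lra. Qed.

Lemma th'_num : th' ^ 5 <= th' ^ 4 + 1.
Proof. rewrite /th' /=. lra. Qed.

Lemma th'_6 : th' ^ 6 <= 6.
Proof. rewrite /th' /=. lra. Qed.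

Lemma INR_Q_mono a b : (a <= b)%N -> INR (Q a) <= INR (Q b).
Proof. move=> hab; apply: le_INR; apply/leP; exact: Q_mono. Qed.

Lemma E_le_Q k : E k <= INR (Q k).
Proof. apply: sr_le1 => i; exact: w_le1. Qed.

Lemma E_ge0 k : 0 <= E k.
Proof. apply: sr_ge0 => i; exact: w_ge0. Qed.

Lemma E_bound k : E k <= INR (Q 25) * th ^ k.
Proof.
have c0 : 0 <= INR (Q 25) := pos_INR _.
have t1 : 1 <= th by rewrite /th; lra.
elim/ltn_ind: k => k IH.
case: (ltnP k 25) => hk.
  have := E_le_Q k. have := @INR_Q_mono k 25 ltac:(lia).
  have := Rmult_le_compat_l _ _ _ c0 (pow_R1_Rle th k t1). lra.
have [p hp] : exists p, k = (p + 25)%N by exists (k - 25)%N; lia.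
subst k.
have := E_rec p.
have := IH (p + 24)%N (ltac:(lia)). have := IH (p + 19)%N (ltac:(lia)).
have := IH (p + 10)%N (ltac:(lia)). have := IH (p + 9)%N (ltac:(lia)).
have := IH (p + 8)%N (ltac:(lia)). have := IH (p + 7)%N (ltac:(lia)).
have := IH (p + 6)%N (ltac:(lia)).
have -> : (p + 25 = p + 6 + 19)%N by lia.
have -> : (p + 24 = p + 6 + 18)%N by lia.
have -> : (p + 19 = p + 6 + 13)%N by lia.
have -> : (p + 10 = p + 6 + 4)%N by lia.
have -> : (p + 9 = p + 6 + 3)%N by lia.
have -> : (p + 8 = p + 6 + 2)%N by lia.
have -> : (p + 7 = p + 6 + 1)%N by lia.
rewrite !(pow_add th (p + 6)) pow_1.
have X0 : 0 <= th ^ (p + 6) by apply: pow_le; rewrite /th; lra.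
have hcX : 0 <= INR (Q 25) * th ^ (p + 6) by apply: Rmult_le_pos.
have key := Rmult_le_compat_l _ _ _ hcX th_num.
move=> *. lra.
Qed.

Lemma Q_lower k : (1 <= k)%N -> / 6 * th' ^ k <= INR (Q k).
Proof.
elim/ltn_ind: k => k IH hk1.
have t1 : 1 <= th' by rewrite /th'; lra.
case: (leqP k 6) => hk.
  have : 1 <= INR (Q k).
    case: k hk1 {IH hk} => [|k] // _. have := Q_pos k => /leP/le_INR. by rewrite /=.
  have := Rle_pow th' k 6 t1 (ltac:(apply/leP; exact: hk)). have := th'_6. lra.
have e : Q k = (Q (k - 1) + Q (k - 5))%N by apply: R1; lia.
rewrite e plus_INR.
have := IH (k - 1)%N ltac:(lia) ltac:(lia). have := IH (k - 5)%N ltac:(lia) ltac:(lia).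
have -> : k = (k - 5 + 5)%N by lia.
have -> : (k - 5 + 5 - 1 = k - 5 + 4)%N by lia.
have -> : (k - 5 + 5 - 5 = k - 5)%N by lia.
rewrite !(pow_add th' (k - 5)).
have X0 : 0 <= th' ^ (k - 5) by apply: pow_le; rewrite /th'; lra.
have key := Rmult_le_compat_l _ _ _ X0 th'_num.
lra.
Qed.


Lemma ln2_pos : (0 < ln 2).
Proof. rewrite -ln_1; apply: ln_increasing; lra. Qed.

Lemma bad_w n m : (0 < n)%N ->
  ~ (/ ln 2 * ln (INR n) <= INR (kmax m) - INR (kmin m)) -> (1 <= INR n * w m).
Proof.
move=> hn hb.
have [L d] := dec_ex m; have kk := kmin_kmax d.
have eh : (INR (kmax m) - INR (kmin m) = INR (h m)).
  by rewrite /h minus_INR //; apply/leP.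
rewrite eh in hb.
have l2 := ln2_pos.
have hn' : (0 < INR n) by apply: lt_0_INR; apply/ltP.
have h1 : (INR (h m) * ln 2 < ln (INR n)).
  apply: Rnot_le_lt => hc; apply: hb.
  apply: (Rmult_le_reg_r (ln 2)) => //. rewrite (Rmult_comm (/ ln 2)) Rmult_assoc Rinv_l; lra.
rewrite -ln_pow in h1; last lra.
have h2 := ln_lt_inv _ _ (pow_lt 2 (h m) ltac:(lra)) hn' h1.
rewrite /w pow_inv.
have h3 : (0 < 2 ^ h m) by apply: pow_lt; lra.
apply: (Rmult_le_reg_r (2 ^ h m)) => //.
rewrite Rmult_assoc Rinv_l; lra.
Qed.

Definition dl := (1 / 1000).
Definition be := (661 / 662 * (1 + dl)).
Definition Kc := (6 * INR (Q 25) * (1 + dl) ^ 4 / dl).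

Lemma main_bound n : (10 <= n)%N ->
  (INR (count (fun m => ~~ (if Rle_dec (/ ln 2 * ln (INR n)) (INR (kmax m) - INR (kmin m))
                          then true else false)) (iota (Q n) (Q n.+1 - Q n)))
     / INR (Q n.+1 - Q n) <= Kc * be ^ (n - 4)).
Proof.
move=> hn.
set P := fun m => _.
have hN : (Q n.+1 - Q n = Q (n - 4))%N by rewrite (@Q_rec n); lia.
rewrite hN.
have Npos : (/ 6 * th' ^ (n - 4) <= INR (Q (n - 4))) by apply: Q_lower; lia.
have thp : (0 < th' ^ (n - 4)) by apply: pow_lt; rewrite /th'; lra.
have Np : (0 < INR (Q (n - 4))) by lra.
have hbad : (INR (count P (iota (Q n) (Q (n - 4)))) <= INR n * E (n - 4)).
  apply: (Rle_trans _ (sr (fun m => INR n * w m) (Q n) (Q (n - 4)))).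
    apply: sr_count.
      move=> i; apply: Rmult_le_pos; [exact: pos_INR | exact: w_ge0].
    move=> i; rewrite /P; case: Rle_dec => //= hc _. apply: bad_w => //; lia.
  rewrite sr_scal; apply: Rmult_le_compat_l; first exact: pos_INR.
  have := @D_le n (n - 4) ltac:(lia) erefl. by rewrite /D hN.
have hE := E_bound (n - 4).
have hn4 : (INR n <= (1 + dl) ^ 4 * (1 + dl) ^ (n - 4) / dl).
  rewrite -pow_add. have -> : Nat.add 4 (n - 4) = n by lia.
  have := poly n dl ltac:(rewrite /dl; lra). rewrite /dl. lra.
have ea : (th ^ (n - 4) = (661 / 662) ^ (n - 4) * th' ^ (n - 4)).
  rewrite -Rpow_mult_distr /th /th'. congr (_ ^ _). lra.
have eb : (be ^ (n - 4) = (661 / 662) ^ (n - 4) * (1 + dl) ^ (n - 4)).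
  by rewrite -Rpow_mult_distr.
rewrite eb /Kc.
apply: (Rmult_le_reg_r (INR (Q (n - 4)))) => //.
rewrite /Rdiv Rmult_assoc Rinv_l; last lra.
rewrite Rmult_1_r.
set A := (661 / 662) ^ (n - 4) in ea eb *. set B := (1 + dl) ^ (n - 4) in hn4 eb *.
set T := th' ^ (n - 4) in thp Npos ea *.
set c := INR (Q 25) in hE *. set F := (1 + dl) ^ 4 in hn4 *.
have A0 : (0 <= A) by apply: pow_le; lra.
have B0 : (0 <= B) by apply: pow_le; rewrite /dl; lra.
have c0 : (0 <= c) by apply: pos_INR.
have F0 : (0 <= F) by apply: pow_le; rewrite /dl; lra.
rewrite ea -/A -/T in hE.
have s1 : (INR n * E (n - 4) <= INR n * (c * (A * T))).
  apply: Rmult_le_compat_l => //; exact: pos_INR.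
have s2 : (INR n * (c * (A * T)) <= (F * B / dl) * (c * (A * T))).
  apply: Rmult_le_compat_r => //. apply: Rmult_le_pos => //. apply: Rmult_le_pos => //. lra.
have s3 : (c * (A * T) <= c * (A * (6 * INR (Q (n - 4))))).
  apply: Rmult_le_compat_l => //; apply: Rmult_le_compat_l => //; lra.
have s4 : ((F * B / dl) * (c * (A * T)) <= (F * B / dl) * (c * (A * (6 * INR (Q (n - 4)))))).
  apply: Rmult_le_compat_l => //. rewrite /Rdiv; apply: Rmult_le_pos; first by apply: Rmult_le_pos.
  rewrite /dl; lra.
have -> : (6 * c * F / dl * (A * B) * INR (Q (n - 4)) = F * B / dl * (c * (A * (6 * INR (Q (n - 4)))))).
  rewrite /Rdiv; ring.
lra.
Qed.

Theorem theorem1p19 :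
  exists C : R, (0 < C) /\
    Un_cv (fun n : nat =>
             (INR (count (fun m : nat =>
                            if Rle_dec (C * ln (INR n)) (INR (kmax m) - INR (kmin m))
                            then true else false)
                         (iota (q n) (q n.+1 - q n)))
              / INR (q n.+1 - q n)))
          1.
Proof.
exists (/ ln 2); split; first by apply: Rinv_0_lt_compat; exact: ln2_pos.
move=> eps heps.
have Kc0 : 0 < Kc.
  rewrite /Kc /dl. have := pow_lt (1 + 1/1000) 4 ltac:(lra).
  have : 0 < INR (Q 25) by apply: lt_0_INR; apply/ltP; exact: Q_pos.
  move=> *. apply: Rmult_lt_0_compat; last lra. apply: Rmult_lt_0_compat => //. lra.
have be1 : Rabs be < 1 by rewrite /be /dl Rabs_pos_eq; lra.
have [M hM] := @pow_lt_1_zero be be1 (eps / Kc) ltac:(apply: Rdiv_lt_0_compat; lra).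
exists (M + 10)%N => n hn.
have hn' : (M + 10 <= n)%N by apply/leP.
rewrite !qQ.
set P := fun m => _.
have cnt := count_predC P (iota (Q n) (Q n.+1 - Q n)).
rewrite size_iota in cnt.
have hb := main_bound (n := n) ltac:(lia).
have e1 : count (predC P) (iota (Q n) (Q n.+1 - Q n)) =
          count (fun m => ~~ (if Rle_dec (/ ln 2 * ln (INR n)) (INR (kmax m) - INR (kmin m))
                          then true else false)) (iota (Q n) (Q n.+1 - Q n)) by [].
rewrite -e1 in hb.
set g := count P _ in cnt *. set b := count (predC P) _ in cnt hb.
set N := (Q n.+1 - Q n)%N in cnt hb *.
have Np : 0 < INR N.
  apply: lt_0_INR; apply/ltP; rewrite /N; have := Q_lt n; lia.
have eg : INR g = INR N - INR b by rewrite -cnt plus_INR; lra.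
rewrite /Rdist eg.
have -> : (INR N - INR b) / INR N - 1 = - (INR b / INR N) by field; lra.
rewrite Rabs_Ropp Rabs_pos_eq; last first.
  have := pos_INR b; have := Rinv_0_lt_compat _ Np; rewrite /Rdiv; nra.
have := hM (n - 4)%N ltac:(apply/leP; lia).
rewrite Rabs_pos_eq; last by apply: pow_le; rewrite /be /dl; lra.
move=> hbe.
apply: (Rle_lt_trans _ _ _ hb).
have : Kc * be ^ (n - 4) < Kc * (eps / Kc) by apply: Rmult_lt_compat_l.
have -> : Kc * (eps / Kc) = eps by field; lra.
done.
Qed.
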